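(* Let $X$ be a set and let $\mathrm{SGD}\langle X\rangle$ be the subalgebra of the free differential Poisson algebra $\mathrm{PoisDer}\langle X,d\rangle$ generated by $X$ with respect to the operations $[u,v]=\{u,v\}$ and $u\circ v=u\,d(v)$ (this is the free algebra of the variety generated by special GD-algebras). Then $\mathrm{SGD}\langle X\rangle$ coincides with the linear span of all differential Poisson monomials in $X$ (expressions built from elements of $X$ using $d$, the commutative product and the bracket) of weight $-1$.
   Context: A Poisson algebra has an associative commutative product and a Lie bracket $\{\cdot,\cdot\}$ satisfying $\{x,yz\}=\{x,y\}z+y\{x,z\}$; $\mathrm{PoisDer}\langle X,d\rangle$ is the free Poisson algebra generated by $X$ with a derivation $d$ of both operations. The weight of differential Poisson monomials is defined by $\mathrm{wt}(x)=-1$ for $x\in X$, $\mathrm{wt}(d(u))=\mathrm{wt}(u)+1$, $\mathrm{wt}(\{u,v\})=\mathrm{wt}(u)+\mathrm{wt}(v)+1$, $\mathrm{wt}(uv)=\mathrm{wt}(u)+\mathrm{wt}(v)$ (well defined since the Poisson identities are homogeneous for this weight). A GD-algebra is special if it embeds into a differential Poisson algebra with $[u,v]=\{u,v\}$ and $u\circ v=u\,d(v)$. *)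

(* Defs.v *)
From HB Require Import structures.
From mathcomp Require Import all_boot all_order all_algebra.
Set Implicit Arguments. Unset Strict Implicit. Unset Printing Implicit Defensive.
Import Order.TTheory GRing.Theory Num.Theory.
Local Open Scope ring_scope.

Record dPoisson (K : fieldType) := DPoisson {
  dp_car :> lmodType K;
  dp_mul : dp_car -> dp_car -> dp_car;
  dp_br  : dp_car -> dp_car -> dp_car;
  dp_d   : dp_car -> dp_car;
  dp_mul_linl : forall (a : K) x y z,
      dp_mul (a *: x + y) z = a *: dp_mul x z + dp_mul y z;
  dp_mulC : forall x y, dp_mul x y = dp_mul y x;
  dp_mulA : forall x y z, dp_mul x (dp_mul y z) = dp_mul (dp_mul x y) z;
  dp_br_linl : forall (a : K) x y z,
      dp_br (a *: x + y) z = a *: dp_br x z + dp_br y z;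
  dp_br_linr : forall (a : K) x y z,
      dp_br z (a *: x + y) = a *: dp_br z x + dp_br z y;
  dp_br_alt : forall x, dp_br x x = 0;
  dp_jacobi : forall x y z,
      dp_br x (dp_br y z) + dp_br y (dp_br z x) + dp_br z (dp_br x y) = 0;
  dp_leibniz : forall x y z,
      dp_br x (dp_mul y z) = dp_mul (dp_br x y) z + dp_mul y (dp_br x z);
  dp_d_lin : forall (a : K) x y, dp_d (a *: x + y) = a *: dp_d x + dp_d y;
  dp_d_mul : forall x y, dp_d (dp_mul x y) = dp_mul (dp_d x) y + dp_mul x (dp_d y);
  dp_d_br : forall x y, dp_d (dp_br x y) = dp_br (dp_d x) y + dp_br x (dp_d y)
}.

Inductive dterm (K : fieldType) (X : Type) : Type :=
  | TVar of X
  | TZero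
  | TAdd of dterm K X & dterm K X
  | TScale of K & dterm K X
  | TMul of dterm K X & dterm K X
  | TBr of dterm K X & dterm K X
  | TD of dterm K X.

Fixpoint deval (K : fieldType) (X : Type) (A : dPoisson K) (v : X -> A)
    (t : dterm K X) : A :=
  match t with
  | TVar x => v x
  | TZero => 0
  | TAdd s u => deval v s + deval v u
  | TScale a s => a *: deval v s
  | TMul s u => dp_mul (deval v s) (deval v u)
  | TBr s u => dp_br (deval v s) (deval v u)
  | TD s => dp_d (deval v s)
  end.

(* Equality in the free differential Poisson algebra PoisDer<X,d>:
   two terms denote the same element iff they agree in every differential
   Poisson algebra under every valuation of X (universal property). *)
Definition poisder_eq (K : fieldType) (X : Type) (t s : dterm K X) : Prop :=
  forall (A : dPoisson K) (v : X -> A), deval v t = deval v s.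

Inductive dmon (X : Type) : Type :=
  | MVar of X
  | MMul of dmon X & dmon X
  | MBr of dmon X & dmon X
  | MD of dmon X.

Fixpoint wt (X : Type) (m : dmon X) : int :=
  match m with
  | MVar _ => -1
  | MMul a b => wt a + wt b
  | MBr a b => wt a + wt b + 1
  | MD a => wt a + 1
  end.

Fixpoint mon_term (K : fieldType) (X : Type) (m : dmon X) : dterm K X :=
  match m with
  | MVar x => TVar K x
  | MMul a b => TMul (mon_term K a) (mon_term K b)
  | MBr a b => TBr (mon_term K a) (mon_term K b)
  | MD a => TD (mon_term K a)
  end.

Fixpoint lincomb (K : fieldType) (X : Type) (s : seq (K * dmon X)) : dterm K X :=
  match s with
  | [::] => TZero K X
  | (c, m) :: s' => TAdd (TScale c (mon_term K m)) (lincomb s')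
  end.

Inductive gdterm (K : fieldType) (X : Type) : Type :=
  | GVar of X
  | GZero
  | GAdd of gdterm K X & gdterm K X
  | GScale of K & gdterm K X
  | GBrk of gdterm K X & gdterm K X
  | GCirc of gdterm K X & gdterm K X.

Fixpoint gd_term (K : fieldType) (X : Type) (g : gdterm K X) : dterm K X :=
  match g with
  | GVar x => TVar K x
  | GZero => TZero K X
  | GAdd a b => TAdd (gd_term a) (gd_term b)
  | GScale c a => TScale c (gd_term a)
  | GBrk a b => TBr (gd_term a) (gd_term b)
  | GCirc a b => TMul (gd_term a) (TD (gd_term b))
  end.

Definition in_SGD (K : fieldType) (X : Type) (t : dterm K X) : Prop :=
  exists g : gdterm K X, poisder_eq t (gd_term g).

Definition in_wt_span (K : fieldType) (X : Type) (t : dterm K X) : Prop :=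
  exists s : seq (K * dmon X),
    all (fun cm => wt cm.2 == -1) s /\ poisder_eq t (lincomb s).

(* Main.v *)
Require Import Defs.
From mathcomp Require Import all_boot all_order all_algebra.
From mathcomp Require Import zify.
Set Implicit Arguments. Unset Strict Implicit. Unset Printing Implicit Defensive.
Import GRing.Theory.
Local Open Scope ring_scope.

Section DP.
Variables (K : fieldType) (A : dPoisson K).
Implicit Types x y z : A.

Lemma mul0l z : dp_mul (0 : A) z = 0.
Proof.
have := dp_mul_linl 1 (0:A) 0 z; rewrite !scale1r addr0 => H.
have : dp_mul (0:A) z + dp_mul 0 z = dp_mul 0 z + 0 by rewrite addr0 -H.
by move/addrI.
Qed.
Lemma mulDl x y z : dp_mul (x + y) z = dp_mul x z + dp_mul y z.
Proof. by have := dp_mul_linl 1 x y z; rewrite !scale1r. Qed.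
Lemma mulZl a x z : dp_mul (a *: x) z = a *: dp_mul x z.
Proof. by have := dp_mul_linl a x 0 z; rewrite !addr0 mul0l addr0. Qed.
Lemma mulDr x y z : dp_mul z (x + y) = dp_mul z x + dp_mul z y.
Proof. by rewrite dp_mulC mulDl !(dp_mulC z). Qed.
Lemma mulZr a x z : dp_mul z (a *: x) = a *: dp_mul z x.
Proof. by rewrite dp_mulC mulZl dp_mulC. Qed.
Lemma mul0r z : dp_mul z (0 : A) = 0.
Proof. by rewrite dp_mulC mul0l. Qed.

Lemma br0l z : dp_br (0 : A) z = 0.
Proof.
have := dp_br_linl 1 (0:A) 0 z; rewrite !scale1r addr0 => H.
have : dp_br (0:A) z + dp_br 0 z = dp_br 0 z + 0 by rewrite addr0 -H.
by move/addrI.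
Qed.
Lemma br0r z : dp_br z (0 : A) = 0.
Proof.
have := dp_br_linr 1 (0:A) 0 z; rewrite !scale1r addr0 => H.
have : dp_br z (0:A) + dp_br z 0 = dp_br z 0 + 0 by rewrite addr0 -H.
by move/addrI.
Qed.
Lemma brDl x y z : dp_br (x + y) z = dp_br x z + dp_br y z.
Proof. by have := dp_br_linl 1 x y z; rewrite !scale1r. Qed.
Lemma brZl a x z : dp_br (a *: x) z = a *: dp_br x z.
Proof. by have := dp_br_linl a x 0 z; rewrite !addr0 br0l addr0. Qed.
Lemma brDr x y z : dp_br z (x + y) = dp_br z x + dp_br z y.
Proof. by have := dp_br_linr 1 x y z; rewrite !scale1r. Qed.
Lemma brZr a x z : dp_br z (a *: x) = a *: dp_br z x.
Proof. by have := dp_br_linr a x 0 z; rewrite !addr0 br0r addr0. Qed.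
Lemma brC x y : dp_br x y = (-1) *: dp_br y x.
Proof.
have := dp_br_alt (x + y); rewrite brDl !brDr !dp_br_alt add0r addr0 => H.
by rewrite scaleN1r; apply/eqP; rewrite -addr_eq0 H.
Qed.
Lemma leibl x y z : dp_br (dp_mul x y) z = dp_mul (dp_br x z) y + dp_mul x (dp_br y z).
Proof.
rewrite brC dp_leibniz scalerDr -mulZl -mulZr -!brC.
by rewrite addrC dp_mulC.
Qed.

Lemma d0 : dp_d (0 : A) = 0.
Proof.
have := dp_d_lin 1 (0:A) 0; rewrite !scale1r addr0 => H.
have : dp_d (0:A) + dp_d 0 = dp_d 0 + 0 by rewrite addr0 -H.
by move/addrI.
Qed.
Lemma dD x y : dp_d (x + y) = dp_d x + dp_d y.
Proof. by have := dp_d_lin 1 x y; rewrite !scale1r. Qed.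
Lemma dZ a x : dp_d (a *: x) = a *: dp_d x.
Proof. by have := dp_d_lin a x 0; rewrite !addr0 d0 addr0. Qed.
End DP.

Section Terms.
Variables (K : fieldType) (X : Type).
Notation term := (dterm K X).
Implicit Types t u s c e : term.

Lemma peq_sym t u : poisder_eq t u -> poisder_eq u t.
Proof. by move=> H A v; rewrite H. Qed.

Lemma SGD_eq t u : poisder_eq t u -> in_SGD t -> in_SGD u.
Proof. by move=> E [g H]; exists g => A v; rewrite -E H. Qed.
Lemma SGD_var (x : X) : in_SGD (TVar K x).
Proof. by exists (GVar K x). Qed.
Lemma SGD_zero : in_SGD (TZero K X).
Proof. by exists (GZero K X). Qed.
Lemma SGD_add t u : in_SGD t -> in_SGD u -> in_SGD (TAdd t u).
Proof. by move=> [g H] [g' H']; exists (GAdd g g') => A v /=; rewrite H H'. Qed.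
Lemma SGD_scale a t : in_SGD t -> in_SGD (TScale a t).
Proof. by move=> [g H]; exists (GScale a g) => A v /=; rewrite H. Qed.
Lemma SGD_br t u : in_SGD t -> in_SGD u -> in_SGD (TBr t u).
Proof. by move=> [g H] [g' H']; exists (GBrk g g') => A v /=; rewrite H H'. Qed.
Lemma SGD_circ t u : in_SGD t -> in_SGD u -> in_SGD (TMul t (TD u)).
Proof. by move=> [g H] [g' H']; exists (GCirc g g') => A v /=; rewrite H H'. Qed.

Definition TSub t u := TAdd t (TScale (-1) u).

Fixpoint G (n : nat) (t : term) : Prop :=
  match n with
  | O => in_SGD t
  | S n => forall s, in_SGD s -> G n (TMul t s)
  end.

Lemma G_eq n t u : poisder_eq t u -> G n t -> G n u.
Proof.
elim: n t u => [|n IH] t u E /=; first exact: SGD_eq.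
move=> H s Hs; apply: (IH _ _ _ (H s Hs)) => A v /=; by rewrite E.
Qed.
Lemma G_add n t u : G n t -> G n u -> G n (TAdd t u).
Proof.
elim: n t u => [|n IH] t u /=; first exact: SGD_add.
move=> Ht Hu s Hs; apply: (G_eq (t := TAdd (TMul t s) (TMul u s))).
  by move=> A v /=; rewrite mulDl.
by apply: IH; [apply: Ht | apply: Hu].
Qed.
Lemma G_scale n a t : G n t -> G n (TScale a t).
Proof.
elim: n t => [|n IH] t /=; first exact: SGD_scale.
move=> Ht s Hs; apply: (G_eq (t := TScale a (TMul t s))).
  by move=> A v /=; rewrite mulZl.
by apply: IH; apply: Ht.
Qed.
Lemma G_sub n t u : G n t -> G n u -> G n (TSub t u).
Proof. by move=> Ht Hu; apply: G_add => //; apply: G_scale. Qed.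

Lemma G_mul b a c e : G a.+1 c -> G b e -> G (a + b) (TMul c e).
Proof.
elim: b e => [|b IH] e Hc He; first by rewrite addn0; exact: Hc.
rewrite addnS /= => s Hs.
apply: (G_eq (t := TMul c (TMul e s))); first by move=> A v /=; rewrite dp_mulA.
by apply: IH => //; apply: He.
Qed.
Lemma G_mul' a b c e : G a c -> G b.+1 e -> G (a + b) (TMul c e).
Proof.
move=> Hc He; rewrite addnC.
apply: (G_eq (t := TMul e c)); first by move=> A v /=; rewrite dp_mulC.
exact: G_mul.
Qed.

Lemma G_d0 s : in_SGD s -> G 1 (TD s).
Proof.
move=> Hs s' Hs'; apply: (@G_eq 0 (TMul s' (TD s))).
  by move=> A v /=; rewrite dp_mulC.
exact: SGD_circ.
Qed.
Lemma G_d k c : G k c -> G k.+1 (TD c).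
Proof.
elim: k c => [|k IH] c; first exact: G_d0.
move=> Hc s Hs; change (G k.+1 (TMul (TD c) s)).
apply: (G_eq (t := TSub (TD (TMul c s)) (TMul c (TD s)))).
  by move=> A v /=; rewrite dp_d_mul scaleN1r addrK.
apply: G_sub; first exact: IH (Hc s Hs).
by rewrite -[k.+1]addn1; apply: G_mul => //; apply: G_d0.
Qed.

Lemma G_br0 b e s : in_SGD s -> G b e -> G b (TBr s e).
Proof.
elim: b e => [|b IH] e Hs He; first exact: SGD_br.
move=> s0 Hs0; change (G b (TMul (TBr s e) s0)).
apply: (G_eq (t := TSub (TBr s (TMul e s0)) (TMul e (TBr s s0)))).
  by move=> A v /=; rewrite dp_leibniz scaleN1r addrK.
apply: G_sub; first exact: IH (He s0 Hs0).
by apply: He; apply: SGD_br.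
Qed.
Lemma G_br0' b e s : in_SGD s -> G b e -> G b (TBr e s).
Proof.
move=> Hs He; apply: (G_eq (t := TScale (-1) (TBr s e))).
  by move=> A v /=; rewrite -brC.
by apply: G_scale; apply: G_br0.
Qed.
Lemma G_br a c b e : G a c -> G b e -> G (a + b) (TBr c e).
Proof.
move=> Hc; elim: b e => [|b IH] e He.
  by rewrite addn0; apply: G_br0'.
rewrite addnS => s0 Hs0; change (G (a + b) (TMul (TBr c e) s0)).
apply: (G_eq (t := TSub (TBr c (TMul e s0)) (TMul e (TBr c s0)))).
  by move=> A v /=; rewrite dp_leibniz scaleN1r addrK.
apply: G_sub; first exact: IH (He s0 Hs0).
rewrite addnC; apply: G_mul => //; exact: G_br0'.
Qed.

End Terms.

Section PGsec.
Variables (K : fieldType) (X : Type).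
Notation term := (dterm K X).
Implicit Types t u s c e : term.

Inductive PG : int -> term -> Prop :=
| PG_one k t w : G k t -> w = k%:Z - 1 -> PG w t
| PG_mul w1 w2 t1 t2 : PG w1 t1 -> PG w2 t2 -> PG (w1 + w2) (TMul t1 t2)
| PG_add w t1 t2 : PG w t1 -> PG w t2 -> PG w (TAdd t1 t2)
| PG_eq w t t' : PG w t -> poisder_eq t t' -> PG w t'.

Lemma PG_w w w' t : PG w t -> w = w' -> PG w' t.
Proof. by move=> H <-. Qed.

Lemma PG_claim w t : PG w t ->
  (forall n : nat, w = n%:Z - 1 -> G n t) /\
  (forall (j : nat) e (n : nat), G j e -> j%:Z + w = n%:Z -> G n (TMul t e)).
Proof.
elim=> {w t}.
- move=> k t w Hk -> {w}; split.
    by move=> n E; have -> : n = k by lia.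
  move=> j e n He E.
  case: k Hk E => [|k] Hk E.
    case: j He E => [|j] He E; first by exfalso; lia.
    have -> : n = (0 + j)%N by lia.
    exact: G_mul'.
  have -> : n = (k + j)%N by lia.
  exact: G_mul.
- move=> w1 w2 t1 t2 _ [A1 B1] _ [A2 B2]; split.
    move=> n E.
    case: (boolP (-1 <= w1)) => h1.
      have H1 := A1 (absz (w1 + 1)) ltac:(lia).
      apply: (G_eq (t := TMul t2 t1)); first by move=> A v /=; rewrite dp_mulC.
      by apply: B2 H1 _; lia.
    have H2 := A2 (absz (w2 + 1)) ltac:(lia).
    by apply: B1 H2 _; lia.
  move=> j e n He E.
  case: (boolP (0 <= j%:Z + w2)) => h2.
    have H2 := B2 j e (absz (j%:Z + w2)) He ltac:(lia).
    apply: (G_eq (t := TMul t1 (TMul t2 e))); first by move=> A v /=; rewrite dp_mulA.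
    by apply: B1 H2 _; lia.
  have H1 := B1 j e (absz (j%:Z + w1)) He ltac:(lia).
  apply: (G_eq (t := TMul t2 (TMul t1 e))).
    by move=> A v /=; rewrite !dp_mulA (dp_mulC (deval v t2)).
  by apply: B2 H1 _; lia.
- move=> w t1 t2 _ [A1 B1] _ [A2 B2]; split.
    by move=> n E; apply: G_add; [apply: A1 | apply: A2].
  move=> j e n He E.
  apply: (G_eq (t := TAdd (TMul t1 e) (TMul t2 e))); first by move=> A v /=; rewrite mulDl.
  by apply: G_add; [apply: B1 He E | apply: B2 He E].
- move=> w t t' _ [A1 B1] E; split.
    by move=> n En; apply: G_eq E _; apply: A1.
  move=> j e n He Ej; apply: (G_eq (t := TMul t e)); first by move=> A v /=; rewrite E.
  exact: B1 He Ej.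
Qed.

Lemma PG_d w t : PG w t -> PG (w + 1) (TD t).
Proof.
elim=> {w t}.
- move=> k t w Hk ->; apply: (PG_one (k := k.+1)); first exact: G_d.
  by rewrite -addn1 PoszD; lia.
- move=> w1 w2 t1 t2 P1 H1 P2 H2.
  apply: (PG_eq (t := TAdd (TMul (TD t1) t2) (TMul t1 (TD t2)))); last first.
    by move=> A v /=; rewrite dp_d_mul.
  apply: PG_add.
    by apply: PG_w; [apply: PG_mul H1 P2 | lia].
  by apply: PG_w; [apply: PG_mul P1 H2 | lia].
- move=> w t1 t2 _ H1 _ H2.
  apply: (PG_eq (t := TAdd (TD t1) (TD t2))); last by move=> A v /=; rewrite dD.
  exact: PG_add.
- move=> w t t' _ H E; apply: PG_eq H _.
  by move=> A v /=; rewrite E.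
Qed.

Lemma PG_brG w1 t1 : PG w1 t1 -> forall k t2, G k t2 -> PG (w1 + k%:Z) (TBr t1 t2).
Proof.
elim=> {w1 t1}.
- move=> k1 t w Hk -> k t2 H2; apply: (PG_one (k := (k1 + k)%N)); first exact: G_br.
  by rewrite PoszD; lia.
- move=> w1 w2 t1 t1' P1 H1 P2 H2 k t2 Ht2.
  apply: (PG_eq (t := TAdd (TMul (TBr t1 t2) t1') (TMul t1 (TBr t1' t2)))); last first.
    by move=> A v /=; rewrite leibl.
  apply: PG_add.
    by apply: PG_w; [apply: PG_mul (H1 _ _ Ht2) P2 | lia].
  by apply: PG_w; [apply: PG_mul P1 (H2 _ _ Ht2) | lia].
- move=> w t1 t1' _ H1 _ H2 k t2 Ht2.
  apply: (PG_eq (t := TAdd (TBr t1 t2) (TBr t1' t2))); last by move=> A v /=; rewrite brDl.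
  by apply: PG_add; [apply: H1 | apply: H2].
- move=> w t t' _ H E k t2 Ht2; apply: PG_eq (H _ _ Ht2) _.
  by move=> A v /=; rewrite E.
Qed.

Lemma PG_br w2 t2 : PG w2 t2 -> forall w1 t1, PG w1 t1 -> PG (w1 + w2 + 1) (TBr t1 t2).
Proof.
elim=> {w2 t2}.
- move=> k t w Hk -> w1 t1 H1; apply: PG_w; [exact: PG_brG H1 _ _ Hk | lia].
- move=> w1 w2 t1 t1' P1 H1 P2 H2 w t Ht.
  apply: (PG_eq (t := TAdd (TMul (TBr t t1) t1') (TMul t1 (TBr t t1')))); last first.
    by move=> A v /=; rewrite dp_leibniz.
  apply: PG_add.
    by apply: PG_w; [apply: PG_mul (H1 _ _ Ht) P2 | lia].
  by apply: PG_w; [apply: PG_mul P1 (H2 _ _ Ht) | lia].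
- move=> w t1 t1' _ H1 _ H2 w' t Ht.
  apply: (PG_eq (t := TAdd (TBr t t1) (TBr t t1'))); last by move=> A v /=; rewrite brDr.
  by apply: PG_add; [apply: H1 | apply: H2].
- move=> w t t' _ H E w' t2 Ht2; apply: PG_eq (H _ _ Ht2) _.
  by move=> A v /=; rewrite E.
Qed.

Lemma PG_mon (m : dmon X) : PG (wt m) (mon_term K m).
Proof.
elim: m => [x|a Ha b Hb|a Ha b Hb|a Ha] /=.
- by apply: (PG_one (k := 0%N)); [apply: SGD_var | ].
- exact: PG_mul.
- exact: PG_br.
- exact: PG_d.
Qed.

Lemma wt_SGD (m : dmon X) : wt m = -1 -> in_SGD (mon_term K m).
Proof.
move=> E; have [A1 _] := PG_claim (PG_mon m).
by apply: (A1 0%N); rewrite E.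
Qed.

End PGsec.

Section Fwd.
Variables (K : fieldType) (X : Type).
Notation term := (dterm K X).
Notation cm := (K * dmon X)%type.

Fixpoint lc_map2 (f : cm -> cm -> cm) (s1 s2 : seq cm) : seq cm :=
  match s1 with
  | [::] => [::]
  | a :: s => map (f a) s2 ++ lc_map2 f s s2
  end.

Lemma lincomb_cat (A : dPoisson K) (v : X -> A) (s1 s2 : seq cm) :
  deval v (lincomb (s1 ++ s2)) = deval v (lincomb s1) + deval v (lincomb s2).
Proof.
elim: s1 => [|[c m] s IH] /=; first by rewrite add0r.
by rewrite IH addrA.
Qed.

Lemma lincomb_map2 (A : dPoisson K) (v : X -> A) (B : A -> A -> A) f s1 s2 :
  (forall x, B 0 x = 0) -> (forall x, B x 0 = 0) ->
  (forall x y z, B (x + y) z = B x z + B y z) ->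
  (forall x y z, B z (x + y) = B z x + B z y) ->
  (forall a b, deval v (TScale (f a b).1 (mon_term K (f a b).2)) =
     B (deval v (TScale a.1 (mon_term K a.2))) (deval v (TScale b.1 (mon_term K b.2)))) ->
  deval v (lincomb (lc_map2 f s1 s2)) = B (deval v (lincomb s1)) (deval v (lincomb s2)).
Proof.
move=> B0l B0r BDl BDr Hf.
elim: s1 => [|a s IH] /=; first by rewrite B0l.
rewrite lincomb_cat IH; case: a => c m /=; rewrite BDl; congr (_ + _).
elim: s2 {IH} => [|b s2 IH2] /=; first by rewrite B0r.
have := Hf (c, m) b; case: (f (c, m) b) => c' m' /= ->.
by case: b => c2 m2 /=; rewrite IH2 BDr.
Qed.

Lemma fwd (g : gdterm K X) : exists s : seq cm,
  all (fun cm => wt cm.2 == -1) s /\ poisder_eq (gd_term g) (lincomb s).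
Proof.
elim: g => [x||g1 [s1 [W1 E1]] g2 [s2 [W2 E2]]|a g1 [s1 [W1 E1]]
           |g1 [s1 [W1 E1]] g2 [s2 [W2 E2]]|g1 [s1 [W1 E1]] g2 [s2 [W2 E2]]].
- exists [:: (1, MVar x)]; split => // A v /=; by rewrite scale1r addr0.
- by exists [::].
- exists (s1 ++ s2); rewrite all_cat W1 W2; split => // A v /=.
  by rewrite lincomb_cat E1 E2.
- exists (map (fun cm => (a * cm.1, cm.2)) s1); split.
    by rewrite all_map.
  move=> A v /=; rewrite E1; elim: (s1) => [|[c m] s IH] /=; first by rewrite scaler0.
  by rewrite -IH scalerDr scalerA.
- exists (lc_map2 (fun a b => (a.1 * b.1, MBr a.2 b.2)) s1 s2); split.
    elim: (s1) W1 => [|a s IH] //= /andP [Wa Ws].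
    rewrite all_cat IH // andbT.
    elim: (s2) W2 {E2} => [|b t IHt] //= /andP [Wb Wt].
    by rewrite IHt // andbT (eqP Wa) (eqP Wb).
  move=> A v /=; rewrite E1 E2; symmetry; apply: lincomb_map2.
  + exact: br0l. + exact: br0r. + exact: brDl. + exact: brDr.
  + by move=> [c m] [c' m'] /=; rewrite brZl brZr scalerA mulrC.
- exists (lc_map2 (fun a b => (a.1 * b.1, MMul a.2 (MD b.2))) s1 s2); split.
    elim: (s1) W1 => [|a s IH] //= /andP [Wa Ws].
    rewrite all_cat IH // andbT.
    elim: (s2) W2 {E2} => [|b t IHt] //= /andP [Wb Wt].
    by rewrite IHt // andbT (eqP Wa) (eqP Wb).
  move=> A v /=; rewrite E1 E2; symmetry; apply: (lincomb_map2 (B := fun x y => dp_mul x (dp_d y))).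
  + by move=> x; rewrite mul0l. + by move=> x; rewrite d0 mul0r.
  + by move=> x y z; rewrite mulDl. + by move=> x y z; rewrite dD mulDr.
  + by move=> [c m] [c' m'] /=; rewrite dZ mulZl mulZr scalerA mulrC.
Qed.

End Fwd.

Unset Implicit Arguments.

Theorem mainTheorem16 (K : fieldType) (X : Type)
    (char0 : [pchar K] =i pred0) (t : dterm K X) :
  in_SGD t <-> in_wt_span t.
Proof.
split.
- move=> [g E]; have [s [W E']] := fwd g; exists s; split => // A v.
  by rewrite E E'.
- move=> [s [W E]]; apply: (SGD_eq (t := lincomb s)); first exact: peq_sym.
  elim: s W {E} => [|[c m] s IH] /=; first by move=> _; exact: SGD_zero.
  move=> /andP [Wm Ws]; apply: SGD_add; last exact: IH.
  by apply: SGD_scale; apply: wt_SGD; apply/eqP.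
Qed.
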